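(* For every $\xi\in(0,1)$ there exists $C(\xi)$ such that if $p\ge C(\log n/n)^{1/2}$, then a.a.s. for every $x\in[1,\xi n/2]$, $G(n,p)$ does not contain a set $W$ of $x$ vertices together with a set $E$ of $x$ pairwise disjoint edges none of which has an endpoint in $W$, such that either the endpoints of each edge in $E$ have at least $\xi np^2$ common neighbours in $W$, or each vertex in $W$ is adjacent to both endpoints of at least $\xi np^2$ edges of $E$.
   Context: $G(n,p)$ is the binomial random graph on $n$ vertices; a.a.s. means with probability tending to $1$ as $n\to\infty$; $\log$ is the natural logarithm. *)

(* Defs.v *)
From HB Require Import structures.
From mathcomp Require Import all_boot all_order all_algebra.
From mathcomp Require Import all_classical all_reals all_analysis.
Set Implicit Arguments. Unset Strict Implicit. Unset Printing Implicit Defensive.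
Import Order.TTheory GRing.Theory Num.Theory.
Local Open Scope ring_scope.

Definition pairs (n : nat) : {set {set 'I_n}} := [set e : {set 'I_n} | #|e| == 2%N].

(* A simple graph on 'I_n is its edge set G, with G \subset pairs n. *)
Definition adj (n : nat) (G : {set {set 'I_n}}) (u v : 'I_n) : bool :=
  [set u; v] \in G.

(* Probability of the event A under the binomial random graph G(n,p):
   each of the #|pairs n| possible edges present independently with prob. p. *)
Definition Gnp_prob (R : realType) (n : nat) (p : R)
    (A : {set {set 'I_n}} -> bool) : R :=
  \sum_(G : {set {set 'I_n}} | (G \subset pairs n) && A G)
     p ^+ #|G| * (1 - p) ^+ (#|pairs n| - #|G|).

Definition adj_both (n : nat) (G : {set {set 'I_n}}) (w : 'I_n) (e : {set 'I_n}) : bool :=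
  [forall v in e, adj G w v].

Definition bad_config (R : realType) (n : nat) (p xi : R) (G : {set {set 'I_n}})
    (x : nat) : Prop :=
  exists (W : {set 'I_n}) (E : {set {set 'I_n}}),
    [/\ #|W| = x /\ #|E| = x, E \subset G, finset.trivIset E,
        (forall e, e \in E -> [disjoint e & W]) &
        ((forall e, e \in E ->
            xi * n%:R * p ^+ 2 <= #|[set w in W | adj_both G w e]|%:R)
         \/
         (forall w, w \in W ->
            xi * n%:R * p ^+ 2 <= #|[set e in E | adj_both G w e]|%:R))].

Definition good_event (R : realType) (n : nat) (p xi : R) (G : {set {set 'I_n}}) : bool :=
  `[< forall x : nat, (1 <= x)%N -> (x%:R <= xi * n%:R / 2 :> R) ->
        ~ bad_config p xi G x >].

(* Main.v *)
Require Import Defs.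
From HB Require Import structures.
From mathcomp Require Import all_boot all_order all_algebra.
From mathcomp Require Import all_classical all_reals all_analysis.
From mathcomp Require Import ring lra zify.
Import Order.TTheory GRing.Theory Num.Theory numFieldNormedType.Exports.
Local Open Scope ring_scope.

Section Binom.
Variable R : realType.

Lemma sum_subsets (T : finType) (A : {set T}) (a b : R) :
  \sum_(S : {set T} | S \subset A) a ^+ #|S| * b ^+ (#|A| - #|S|) = (a + b) ^+ #|A|.
Proof.
rewrite addrC exprDn.
rewrite (partition_big (fun S : {set T} => (inord #|S| : 'I_(#|A|.+1))) xpredT) //=.
apply: eq_bigr => i _.
have -> : \sum_(S : {set T} | (S \subset A) && ((inord #|S| : 'I_(#|A|.+1)) == i))
     a ^+ #|S| * b ^+ (#|A| - #|S|) =
   \sum_(S in [set S : {set T} | S \subset A & #|S| == i]) a ^+ i * b ^+ (#|A| - i).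
  apply: eq_big => S; rewrite ?inE.
    case sA: (S \subset A) => //=.
    have le : (#|S| <= #|A|)%N by apply: subset_leq_card.
    have le' : (#|S| < #|A|.+1)%N by [].
    apply/eqP/eqP => [<-|E]; first by rewrite inordK.
    by apply: val_inj; rewrite /= inordK.
  by case/andP => sA /eqP <-; rewrite inordK // ltnS subset_leq_card.
by rewrite sumr_const cards_draws mulrC.
Qed.

End Binom.

Set Implicit Arguments. Unset Strict Implicit.


Section Ex.
Variables (R : realType) (n : nat) (p : R).
Hypotheses (hp0 : 0 <= p) (hp1 : p <= 1).

Local Notation P := (pairs n).
Definition wt (G : {set {set 'I_n}}) : R := p ^+ #|G| * (1 - p) ^+ (#|P| - #|G|).
Definition Ex (f : {set {set 'I_n}} -> R) : R := \sum_(G : {set {set 'I_n}} | G \subset P) wt G * f G.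

Lemma wt_ge0 G : 0 <= wt G.
Proof. by rewrite /wt mulr_ge0 // exprn_ge0 // subr_ge0. Qed.

Lemma gnp_Ex A : Gnp_prob p A = Ex (fun G => (A G)%:R).
Proof.
rewrite /Gnp_prob /Ex big_mkcondr /=; apply: eq_bigr => G _.
by case: (A G); rewrite ?mulr1 ?mulr0.
Qed.

Lemma Ex_eq (f g : {set {set 'I_n}} -> R) : (forall G : {set {set 'I_n}}, f G = g G) -> Ex f = Ex g.
Proof. by move=> H; apply: eq_bigr => G _; rewrite H. Qed.

Lemma Ex_le (f g : {set {set 'I_n}} -> R) : (forall G : {set {set 'I_n}}, G \subset P -> f G <= g G) -> Ex f <= Ex g.
Proof. by move=> H; apply: ler_sum => G /H fg; rewrite ler_wpM2l ?wt_ge0. Qed.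

Lemma ExD (f g : {set {set 'I_n}} -> R) : Ex (fun G => f G + g G) = Ex f + Ex g.
Proof. by rewrite /Ex -big_split /=; apply: eq_bigr => G _; rewrite mulrDr. Qed.

Lemma ExZ c f : Ex (fun G => c * f G) = c * Ex f.
Proof. by rewrite /Ex mulr_sumr; apply: eq_bigr => G _; rewrite mulrCA. Qed.

Lemma Ex_sum (I : finType) (Q : pred I) (F : I -> {set {set 'I_n}} -> R) :
  Ex (fun G => \sum_(i | Q i) F i G) = \sum_(i | Q i) Ex (F i).
Proof.
rewrite /Ex exchange_big /=; apply: eq_bigr => G _; by rewrite mulr_sumr.
Qed.

Lemma Ex_sub (F : {set {set 'I_n}}) : F \subset P ->
  Ex (fun G : {set {set 'I_n}} => (F \subset G)%:R) = p ^+ #|F|.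
Proof.
move=> FP.
have -> : Ex (fun G : {set {set 'I_n}} => (F \subset G)%:R) =
  \sum_(G : {set {set 'I_n}} | (G \subset P) && (F \subset G)) wt G.
  rewrite /Ex [RHS]big_mkcondr /=; apply: eq_bigr => G _.
  by case: (F \subset G); rewrite ?mulr1 ?mulr0.
rewrite (reindex_onto (fun H => F :|: H) (fun G => G :\: F)); last first.
  move=> G /andP[_ FG]; apply/setP=> e; rewrite !inE.
  by case eF: (e \in F) => //=; rewrite (fintype.subsetP FG).
transitivity (\sum_(H : {set {set 'I_n}} | H \subset P :\: F) wt (F :|: H)).
  apply: eq_bigl => H /=; rewrite finset.subUset FP /= finset.subsetUl andbT /= finset.setDUl finset.setDv finset.set0U finset.subsetD.
  by congr (_ && _); apply/idP/idP => [/eqP/finset.setDidPl -> | /finset.setDidPl ->].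
transitivity (\sum_(H : {set {set 'I_n}} | H \subset P :\: F)
   p ^+ #|F| * (p ^+ #|H| * (1 - p) ^+ (#|P :\: F| - #|H|))).
  apply: eq_bigr => H; rewrite finset.subsetD => /andP[_ dHF].
  rewrite /wt finset.cardsU finset.setIC (finset.disjoint_setI0 dHF) finset.cards0 subn0.
  by rewrite exprD -mulrA (finset.cardsDS FP) subnDA.
by rewrite -mulr_sumr sum_subsets addrC subrK expr1n mulr1.
Qed.

End Ex.

Section Config.
Variables (R : realType) (n : nat) (p : R).
Hypotheses (hp0 : 0 <= p) (hp1 : p <= 1).
Variables (W : {set 'I_n}) (E : {set {set 'I_n}}).
Hypotheses (EP : E \subset pairs n) (tE : finset.trivIset E)
  (dE : forall e, e \in E -> [disjoint e & W]).

Local Notation P := (pairs n).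
Local Notation K := (finset.setX W E).
Definition AG (G : {set {set 'I_n}}) : {set 'I_n * {set 'I_n}} :=
  [set k in K | adj_both G k.1 k.2].
Definition DS (S : {set 'I_n * {set 'I_n}}) : {set ('I_n * {set 'I_n}) * 'I_n} :=
  [set kv | (kv.1 \in S) && (kv.2 \in kv.1.2)].
Definition gmap (kv : ('I_n * {set 'I_n}) * 'I_n) : {set 'I_n} := [set kv.1.1; kv.2].
Definition FS S := [set gmap kv | kv in DS S].

Lemma inK_neq (k : 'I_n * {set 'I_n}) v : k \in K -> v \in k.2 -> k.1 != v.
Proof.
case: k => w e; rewrite finset.in_setX /= => /andP[wW eE] ve.
apply/eqP => ewv; move: wW; rewrite ewv => vW.
by move: (dE eE) => /disjointFr/(_ ve); rewrite vW.
Qed.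

Lemma inK_card2 (k : 'I_n * {set 'I_n}) : k \in K -> #|k.2| = 2%N.
Proof.
case: k => w e; rewrite finset.in_setX /= => /andP[_ eE].
by have := fintype.subsetP EP _ eE; rewrite inE => /eqP.
Qed.

Lemma FS_subG (S : {set 'I_n * {set 'I_n}}) (G : {set {set 'I_n}}) : S \subset K -> (FS S \subset G) = (S \subset AG G).
Proof.
move=> SK; apply/idP/idP => [FSG | SA].
  apply/fintype.subsetP => k kS; rewrite inE (fintype.subsetP SK _ kS) /=.
  apply/forallP => v; apply/implyP => vk; rewrite /adj.
  apply: (fintype.subsetP FSG); apply/finset.imsetP; exists (k, v) => //.
  by rewrite inE /= kS vk.
apply/fintype.subsetP => f /finset.imsetP [kv]; rewrite inE => /andP [kS vk] ->.
have := fintype.subsetP SA _ kS; rewrite inE => /andP[_ /forallP /(_ kv.2)].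
by rewrite vk.
Qed.

Lemma FS_P (S : {set 'I_n * {set 'I_n}}) : S \subset K -> FS S \subset P.
Proof.
move=> SK; apply/fintype.subsetP => f /finset.imsetP [kv]; rewrite inE => /andP [kS vk] ->.
by rewrite inE /gmap finset.cards2 (@inK_neq kv.1 kv.2 (fintype.subsetP SK _ kS) vk).
Qed.

Lemma card_DS (S : {set 'I_n * {set 'I_n}}) : S \subset K -> #|DS S| = (2 * #|S|)%N.
Proof.
move=> SK; rewrite /DS -sum1dep_card -(pair_big_dep (fun k => k \in S) (fun k v => v \in k.2) (fun _ _ => 1%N)) /=.
rewrite (eq_bigr (fun _ => 2%N)); last first.
  by move=> k kS; rewrite sum1dep_card -(@inK_card2 k (fintype.subsetP SK _ kS)); apply: eq_card => v; rewrite inE.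
by rewrite sum_nat_const mulnC; congr (_ * _)%N; apply: eq_card => k; rewrite inE.
Qed.

Lemma gmap_inj (S : {set 'I_n * {set 'I_n}}) : S \subset K -> {in DS S &, injective gmap}.
Proof.
move=> SK [[w e] v] [[w' e'] v']; rewrite !inE /= => /andP[kS ve] /andP[kS' ve'] eqg.
have := fintype.subsetP SK _ kS; have := fintype.subsetP SK _ kS'.
rewrite !finset.in_setX /= => /andP[w'W e'E] /andP[wW eE].
have nvW : forall u f, f \in E -> u \in f -> (u \in W) = false.
  by move=> u f fE uf; exact: disjointFr (dE fE) uf.
have hw : w = w'.
  have : w \in [set w'; v'] by rewrite /gmap /= in eqg; rewrite -eqg finset.set21.
  rewrite finset.in_set2 => /orP[/eqP // | /eqP wv'].
  by move: (nvW _ _ e'E ve'); rewrite -wv' wW.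
subst w'.
have hv : v = v'.
  have : v \in [set w; v'] by rewrite /gmap /= in eqg; rewrite -eqg finset.set22.
  rewrite finset.in_set2 => /orP[/eqP vw | /eqP //].
  by move: (nvW _ _ eE ve); rewrite vw wW.
subst v'.
have he : e = e'.
  apply/eqP; apply: contraT => neq.
  have := (finset.trivIsetP tE) e e' eE e'E neq.
  by move=> /disjointFr/(_ ve); rewrite ve'.
by rewrite he.
Qed.

Lemma card_FS (S : {set 'I_n * {set 'I_n}}) : S \subset K -> #|FS S| = (2 * #|S|)%N.
Proof. by move=> SK; rewrite /FS (card_in_imset (gmap_inj SK)) card_DS. Qed.

Lemma AG_K G : AG G \subset K.
Proof. by apply/fintype.subsetP => k; rewrite inE => /andP[]. Qed.

Lemma Ex_tpow c : Ex p (fun G => (1 + c) ^+ #|AG G|) = (1 + c * p ^+ 2) ^+ #|K|.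
Proof.
transitivity (Ex p (fun G => \sum_(S : {set 'I_n * {set 'I_n}} | S \subset K)
                  c ^+ #|S| * (FS S \subset G)%:R)).
  apply: Ex_eq => G; rewrite addrC -sum_subsets.
  symmetry; transitivity (\sum_(S : {set 'I_n * {set 'I_n}} | S \subset K)
     if S \subset AG G then c ^+ #|S| else 0).
    by apply: eq_bigr => S SK; rewrite FS_subG //; case: ifP; rewrite ?mulr1 ?mulr0.
  rewrite -big_mkcondr /=; apply: eq_big => [S|S _]; last by rewrite expr1n mulr1.
  apply/andP/idP => [[]//|SA]; split=> //.
  exact: fintype.subset_trans SA (AG_K G).
rewrite Ex_sum.
transitivity (\sum_(S : {set 'I_n * {set 'I_n}} | S \subset K)
                  (c * p ^+ 2) ^+ #|S| * 1 ^+ (#|K| - #|S|)).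
  apply: eq_bigr => S SK.
  by rewrite ExZ Ex_sub ?FS_P // card_FS // expr1n mulr1 exprMn exprM.
by rewrite sum_subsets addrC.
Qed.

Lemma expR13 : expR (1 / 3 : R) <= 3 / 2.
Proof.
have h := expR_ge1Dx (- (1 / 3) : R); rewrite expRN in h.
have y0 : 0 < expR (1 / 3 : R) := expR_gt0 _.
have hy : expR (1 / 3 : R) * (expR (1 / 3))^-1 = 1 by rewrite mulfV // gt_eqF.
have h3 : 0 <= expR (1 / 3 : R) * ((expR (1 / 3))^-1 - (1 - 1 / 3)).
  by apply: mulr_ge0; [exact: ltW | rewrite subr_ge0].
rewrite mulrBr hy in h3.
lra.
Qed.

Lemma Ex_tail (m : R) : Ex p (fun G => ((m <= (#|AG G|)%:R)%R : bool)%:R)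
   <= expR (- (m / 3) + (#|K|%:R * p ^+ 2) / 2).
Proof.
apply: (@le_trans _ _ (Ex p (fun G => expR (- (m / 3)) * (1 + 1 / 2) ^+ #|AG G|))).
  apply: (Ex_le hp0 hp1) => G _; set X := #|AG G|.
  case: (boolP (m <= X%:R)) => hm /=; last by rewrite mulr_ge0 ?expR_ge0 ?exprn_ge0.
  have h1 : expR (X%:R * (1 / 3) : R) <= (1 + 1 / 2) ^+ X.
    rewrite expRM_natl; apply: lerXn2r; rewrite ?nnegrE ?expR_ge0 //; try lra.
    by apply: le_trans expR13 _; lra.
  have h2 : expR (m / 3) <= expR (X%:R * (1 / 3) : R).
    by rewrite ler_expR mulrC mul1r mulrC; rewrite ler_pM2r.
  apply: le_trans (ler_wpM2l (expR_ge0 _) (le_trans h2 h1)).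
  by rewrite -expRD addNr expR0.
rewrite ExZ Ex_tpow expRD ler_wpM2l ?expR_ge0 //.
apply: le_trans (_ : expR (1 / 2 * p ^+ 2) ^+ #|K| <= _).
  apply: lerXn2r; rewrite ?nnegrE ?expR_ge0 //; last exact: expR_ge1Dx.
  by apply: addr_ge0 => //; apply: mulr_ge0 => //; exact: sqr_ge0.
have -> : #|K|%:R * p ^+ 2 / 2 = #|K|%:R * (1 / 2 * p ^+ 2) :> R by ring.
by rewrite expRM_natl.
Qed.

End Config.

Section Bad.
Variables (R : realType) (n : nat) (p xi : R).
Hypotheses (hp0 : 0 <= p) (hp1 : p <= 1) (hxi0 : 0 < xi) (hxi1 : xi < 1).
Local Notation P := (pairs n).

Lemma card_AG (W : {set 'I_n}) (E : {set {set 'I_n}}) (G : {set {set 'I_n}}) :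
  (#|AG W E G|)%:R = \sum_(w in W) \sum_(e in E) (adj_both G w e)%:R :> R.
Proof.
rewrite /AG -sum1dep_card natr_sum.
rewrite (eq_bigl (fun k => ((k.1 \in W) && (k.2 \in E)) && adj_both G k.1 k.2)); last first.
  by case=> w e; rewrite !inE.
rewrite big_mkcondr /= (pair_big_dep (fun w => w \in W) (fun w e => e \in E)
   (fun w e => (adj_both G w e)%:R)) /=.
by apply: eq_bigr => k _; case: (adj_both G k.1 k.2).
Qed.

Lemma card_sel (T : finType) (A : {set T}) (Q : pred T) :
  (#|[set w in A | Q w]|)%:R = \sum_(w in A) (Q w)%:R :> R.
Proof.
rewrite -sum1dep_card natr_sum big_mkcondr /=.
by apply: eq_bigr => w _; case: (Q w).
Qed.

Lemma bad_X (G : {set {set 'I_n}}) x : G \subset P -> bad_config p xi G x ->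
  exists (W : {set 'I_n}) (E : {set {set 'I_n}}), [/\ #|W| = x /\ #|E| = x, E \subset P, finset.trivIset E,
     (forall e, e \in E -> [disjoint e & W]) &
     x%:R * (xi * n%:R * p ^+ 2) <= (#|AG W E G|)%:R].
Proof.
move=> GP [W [E [[cW cE] EG tE dE H]]].
exists W, E; split => //; first exact: fintype.subset_trans EG GP.
rewrite card_AG; set d := xi * n%:R * p ^+ 2.
case: H => H.
- rewrite exchange_big /=.
  have : \sum_(e in E) d <= \sum_(e in E) \sum_(w in W) (adj_both G w e)%:R.
    by apply: ler_sum => e eE; rewrite -(card_sel W (fun w => adj_both G w e)); exact: H.
  by rewrite sumr_const cE mulr_natl.
- have : \sum_(w in W) d <= \sum_(w in W) \sum_(e in E) (adj_both G w e)%:R.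
    by apply: ler_sum => w wW; rewrite -(card_sel E (fun e => adj_both G w e)); exact: H.
  by rewrite sumr_const cW mulr_natl.
Qed.

Lemma le_sum1 (I : finType) (Q : pred I) (F : I -> R) i0 :
  Q i0 -> (forall i, Q i -> 0 <= F i) -> F i0 <= \sum_(i | Q i) F i.
Proof.
move=> Qi0 F0; rewrite (bigD1 i0) //= lerDl sumr_ge0 // => i /andP[Qi _].
exact: F0.
Qed.

Definition cond x (W : {set 'I_n}) (E : {set {set 'I_n}}) : bool :=
  [&& #|W| == x, E \subset P, #|E| == x, finset.trivIset E &
      [forall e in E, [disjoint e & W]]].
Definition goodx (x : nat) : bool := (0 < x)%N && (x%:R <= xi * n%:R / 2).
Definition term x W E (G : {set {set 'I_n}}) : R := (cond x W E)%:R *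
  ((x%:R * (xi * n%:R * p ^+ 2) <= (#|AG W E G|)%:R)%R : bool)%:R.

Lemma term_ge0 x W E G : 0 <= term x W E G.
Proof. by rewrite /term mulr_ge0 ?ler0n. Qed.

Lemma bad_le (G : {set {set 'I_n}}) : G \subset P ->
  (~~ good_event p xi G)%:R <= \sum_(x < n | goodx x) \sum_(W : {set 'I_n})
      \sum_(E : {set {set 'I_n}}) term x W E G.
Proof.
move=> GP; case: (boolP (good_event p xi G)) => hg /=.
  by rewrite sumr_ge0 // => x _; rewrite sumr_ge0 // => W _; rewrite sumr_ge0 // => E _;
     exact: term_ge0.
have [x [x1 xle hb]] : exists x : nat,
    [/\ (1 <= x)%N, x%:R <= xi * n%:R / 2 & bad_config p xi G x].
  move/asboolPn: hg => hg; apply: contrapT => nex; apply: hg => x x1 xle hb.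
  by apply: nex; exists x.
have xn : (x < n)%N.
  have hx1 : (1 : R) <= x%:R by rewrite ler1n.
  have hn : (0 : R) <= n%:R by [].
  have h1xi : (0 : R) <= 1 - xi.
    by rewrite subr_ge0 ltW.
  have h := mulr_ge0 h1xi hn.
  rewrite mulrBl mul1r in h; rewrite -(ltr_nat R).
  move: hx1 xle h; set X := x%:R; set N := n%:R; set Y := xi * N => hx1 xle h; lra.
have [W [E [[cW cE] EP tE dE hX]]] := bad_X GP hb.
have t0 : 1 <= term x W E G.
  have hf : [forall e in E, [disjoint e & W]].
    by apply/forallP => e; apply/implyP; exact: dE.
  by rewrite /term /cond cW cE eqxx EP tE hf /= hX mul1r.
have t1 : term x W E G <= \sum_(E' : {set {set 'I_n}}) term x W E' G.
  apply: (@le_sum1 _ (fun _ => true) (fun E' => term x W E' G)) => // *.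
  exact: term_ge0.
have t2 : \sum_(E' : {set {set 'I_n}}) term x W E' G <=
    \sum_(W' : {set 'I_n}) \sum_(E' : {set {set 'I_n}}) term x W' E' G.
  apply: (@le_sum1 _ (fun _ => true) (fun W' => \sum_(E' : {set {set 'I_n}}) term x W' E' G)) => // *.
  by apply: sumr_ge0 => *; exact: term_ge0.
have t3 : \sum_(W' : {set 'I_n}) \sum_(E' : {set {set 'I_n}}) term x W' E' G <=
    \sum_(x' < n | goodx x') \sum_(W' : {set 'I_n}) \sum_(E' : {set {set 'I_n}}) term x' W' E' G.
  apply: (@le_sum1 _ (fun i : 'I_n => goodx i) (fun x' : 'I_n => \sum_(W' : {set 'I_n}) \sum_(E' : {set {set 'I_n}}) term x' W' E' G) (Ordinal xn)).
    by rewrite /goodx x1 xle.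
  by move=> *; apply: sumr_ge0 => *; apply: sumr_ge0 => *; exact: term_ge0.
exact: le_trans t0 (le_trans t1 (le_trans t2 t3)).
Qed.

Lemma Ex_term x W E : goodx x ->
  Ex p (term x W E) <= ((#|W| == x) && ((E \subset P) && (#|E| == x)))%:R *
     expR (- (x%:R * (xi * n%:R * p ^+ 2)) / 12).
Proof.
move=> /andP[x0 xle].
rewrite /term ExZ.
case: (boolP (cond x W E)) => hc; last first.
  by rewrite mul0r mulr_ge0 ?ler0n ?expR_ge0.
move: (hc) => /and5P[/eqP cW EP /eqP cE tE /forallP dE'].
have dE : forall e, e \in E -> [disjoint e & W].
  by move=> e eE; move: (dE' e); rewrite eE.
rewrite mul1r cW EP cE eqxx /= mul1r.
apply: le_trans (Ex_tail hp0 hp1 EP tE dE _) _.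
rewrite ler_expR finset.cardsX cW cE natrM.
have hx : (0 : R) <= x%:R by [].
have hp2 : (0 : R) <= p ^+ 2 by exact: sqr_ge0.
have hs : 0 <= xi * n%:R / 2 - x%:R by rewrite subr_ge0.
have h := mulr_ge0 (mulr_ge0 hx hp2) hs.
move: h hx hp2 xle; set X := x%:R; set N := n%:R; set q := p ^+ 2 => h hx hp2 xle.
nra.
Qed.

Lemma card_selT (T : finType) (Q : pred T) :
  \sum_(w : T) (Q w)%:R = (#|[set w | Q w]|)%:R :> R.
Proof.
rewrite -sum1dep_card natr_sum [RHS]big_mkcond /=.
by apply: eq_bigr => w _; case: (Q w).
Qed.

Lemma sum_count x (T : R) :
  \sum_(W : {set 'I_n}) \sum_(E : {set {set 'I_n}})
     ((#|W| == x) && ((E \subset P) && (#|E| == x)))%:R * T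
  = ('C(n, x) * 'C(#|P|, x))%:R * T.
Proof.
transitivity (\sum_(W : {set 'I_n}) (#|W| == x)%:R *
   ((\sum_(E : {set {set 'I_n}}) ((E \subset P) && (#|E| == x))%:R) * T)).
  apply: eq_bigr => W _; rewrite mulr_suml mulr_sumr; apply: eq_bigr => E _.
  by rewrite -mulnb natrM mulrA.
rewrite -mulr_suml !card_selT card_draws card_ord cards_draws.
by rewrite natrM mulrA.
Qed.

End Bad.

Lemma ffact_le m k : (m ^_ k <= m ^ k)%N.
Proof.
elim: k => [|k IH]; first by rewrite ffactn0 expn0.
by rewrite ffactnSr expnSr leq_mul // leq_subr.
Qed.

Lemma bin_le m k : ('C(m, k) <= m ^ k)%N.
Proof.
apply: leq_trans (ffact_le m k); rewrite -bin_ffact.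
by rewrite leq_pmulr // fact_gt0.
Qed.

Lemma card_pairs n : (#|pairs n| <= n ^ 2)%N.
Proof. by rewrite /pairs card_draws card_ord bin_le. Qed.


Section Final.
Variables (R : realType) (n : nat) (p xi : R).
Hypotheses (hp0 : 0 <= p) (hp1 : p <= 1) (hxi0 : 0 < xi) (hxi1 : xi < 1).
Local Notation P := (pairs n).

Lemma term_bound x : goodx n xi x -> (1 <= n)%N -> 60 * ln (n%:R : R) <= xi * n%:R * p ^+ 2 ->
  ('C(n, x) * 'C(#|P|, x))%:R * expR (- (x%:R * (xi * n%:R * p ^+ 2)) / 12)
     <= ((n%:R : R) ^+ 2)^-1.
Proof.
move=> /andP[x0 _] n1 hd.
have lnn : 0 <= ln (n%:R : R) by rewrite ln_ge0 // ler1n.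
have npos : 0 < (n%:R : R) by rewrite ltr0n.
have hc : ('C(n, x) * 'C(#|P|, x) <= n ^ (3 * x))%N.
  have hP : (#|P| ^ x <= (n ^ 2) ^ x)%N by rewrite leq_exp2r // card_pairs.
  apply: leq_trans (leq_mul (bin_le n x) (leq_trans (bin_le _ x) hP)) _.
  by rewrite -expnM -expnD; apply: leq_pexp2l; [rewrite lt0n; apply/eqP => n0; move: n1; rewrite n0 | rewrite mulnC; lia].
have e1 : (n ^ (3 * x))%:R = expR ((3 * x)%:R * ln (n%:R : R)) :> R.
  by rewrite expRM_natl lnK ?natrX // posrE.
apply: le_trans (_ : expR ((3 * x)%:R * ln (n%:R : R)) *
   expR (- (x%:R * (xi * n%:R * p ^+ 2)) / 12) <= _).
  by rewrite ler_wpM2r ?expR_ge0 // -e1 ler_nat.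
rewrite -expRD.
have -> : ((n%:R : R) ^+ 2)^-1 = expR (- (2%:R * ln (n%:R : R))).
  by rewrite expRN expRM_natl lnK // posrE.
rewrite ler_expR natrM.
have hx : (1 : R) <= x%:R by rewrite ler1n.
have h1 := ler_wpM2l (ler0n R x) hd.
have hx' : (0 : R) <= x%:R - 1 by rewrite subr_ge0.
have h2 := mulr_ge0 hx' lnn.
move: h1 h2 hx lnn; set X := x%:R; set L := ln _; set d := xi * _ * _ => h1 h2 hx lnn.
nra.
Qed.

Lemma gnp_bad : (1 <= n)%N -> 60 * ln (n%:R : R) <= xi * n%:R * p ^+ 2 ->
  Gnp_prob p (fun G : {set {set 'I_n}} => ~~ good_event p xi G) <= (n%:R : R)^-1.
Proof.
move=> n1 hd.
rewrite gnp_Ex.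
pose g := fun G => \sum_(x < n | goodx n xi x) \sum_(W : {set 'I_n})
   \sum_(E : {set {set 'I_n}}) term p xi x W E G.
apply: (@le_trans _ _ (Ex p g)).
  by apply: (Ex_le hp0 hp1) => G GP; apply: bad_le.
rewrite /g Ex_sum.
apply: (@le_trans _ _ (\sum_(x < n | goodx n xi x) ((n%:R : R) ^+ 2)^-1)).
  apply: ler_sum => x gx; rewrite Ex_sum.
  under eq_bigr do rewrite Ex_sum.
  apply: (@le_trans _ _ (\sum_(W : {set 'I_n}) \sum_(E : {set {set 'I_n}})
     ((#|W| == x) && ((E \subset P) && (#|E| == x)))%:R *
     expR (- (x%:R * (xi * n%:R * p ^+ 2)) / 12))).
    by apply: ler_sum => W _; apply: ler_sum => E _; exact: Ex_term.
  by rewrite sum_count; exact: term_bound.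
rewrite big_mkcond /=.
apply: (@le_trans _ _ (\sum_(x < n) ((n%:R : R) ^+ 2)^-1)).
  apply: ler_sum => x _; case: ifP => // _.
have nn : (n%:R : R) != 0 by rewrite pnatr_eq0 -lt0n.
rewrite sumr_const card_ord.
have -> : ((n%:R : R) ^+ 2)^-1 *+ n = (n%:R)^-1 by rewrite -mulr_natl; field.
by [].
Qed.

End Final.

Unset Implicit Arguments. Set Strict Implicit.
Local Open Scope classical_set_scope.
Local Open Scope ring_scope.

Lemma gnp_compl (R : realType) (n : nat) (p : R) (A : {set {set 'I_n}} -> bool) :
  Gnp_prob p A + Gnp_prob p (fun G => ~~ A G) = 1.
Proof.
rewrite !gnp_Ex -ExD.
rewrite (@Ex_eq _ _ _ _ (fun G => ((finset.set0 : {set {set 'I_n}}) \subset G)%:R)); last first.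
  by move=> G; rewrite finset.sub0set; case: (A G); rewrite /= ?addr0 ?add0r.
by rewrite Ex_sub ?finset.sub0set // finset.cards0 expr0.
Qed.

Lemma gnp_ge0 (R : realType) (n : nat) (p : R) (A : {set {set 'I_n}} -> bool) :
  0 <= p -> p <= 1 -> 0 <= Gnp_prob p A.
Proof.
move=> hp0 hp1; rewrite /Gnp_prob sumr_ge0 // => G _.
by rewrite mulr_ge0 // exprn_ge0 // subr_ge0.
Qed.

Lemma cvg_low (R : realType) : (1 - 2 * harmonic n : R) @[n --> \oo] --> (1 : R).
Proof.
have h : (2 * harmonic n : R) @[n --> \oo] --> (0 : R).
  rewrite -(mulr0 (2 : R)); apply: cvgM; [exact: cvg_cst | exact: cvg_harmonic].
rewrite -[X in _ --> X](subr0 (1 : R)); apply: cvgB; [exact: cvg_cst | exact: h].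
Qed.

Theorem proposition4p3 (R : realType) (xi : R) (hxi0 : 0 < xi) (hxi1 : xi < 1) :
  exists C : R, 0 < C /\
    forall p : nat -> R,
      (forall n, 0 <= p n <= 1) ->
      (\forall n \near \oo, C * Num.sqrt (ln n%:R / n%:R) <= p n) ->
      Gnp_prob (p n) (@good_event R n (p n) xi) @[n --> \oo] --> (1 : R).
Proof.
pose C := 1 + 60 / xi.
have C1 : 1 <= C by rewrite /C lerDl divr_ge0 // ltW.
exists C; split; first by apply: lt_le_trans C1.
move=> p hp hC.
apply: (@squeeze_cvgr _ _ _ _ (fun n => 1 - 2 * harmonic n) (fun _ => 1)); last first.
- exact: cvg_cst.
- exact: cvg_low.
near=> n.
have n1 : (1 <= n)%N by near: n; exists 1%N.
have hCn : C * Num.sqrt (ln n%:R / n%:R) <= p n by near: n; exact: hC.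
have /andP[hp0 hp1] := hp n.
have hd : 60 * ln (n%:R : R) <= xi * n%:R * p n ^+ 2.
  have N0 : (0 : R) < n%:R by rewrite ltr0n.
  have L0 : (0 : R) <= ln n%:R by rewrite ln_ge0 // ler1n.
  have s0 : (0 : R) <= ln n%:R / n%:R by rewrite divr_ge0 // ltW.
  have hq : C ^+ 2 * (ln n%:R / n%:R) <= p n ^+ 2.
    rewrite -(sqr_sqrtr s0) -exprMn; apply: lerXn2r; rewrite ?nnegrE //.
    by rewrite mulr_ge0 ?sqrtr_ge0 // (le_trans _ C1).
  have e : xi * n%:R * (C ^+ 2 * (ln n%:R / n%:R)) = xi * C ^+ 2 * ln (n%:R : R).
    by field; rewrite gt_eqF.
  have h1 := ler_wpM2l (mulr_ge0 (ltW hxi0) (ltW N0)) hq.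
  rewrite e in h1.
  have h3 : xi * C = xi + 60 by rewrite /C; field; rewrite gt_eqF.
  have hCC : 0 <= C ^+ 2 - C by rewrite expr2 subr_ge0 ler_peMl // (le_trans _ C1).
  have h4 := mulr_ge0 (mulr_ge0 (ltW hxi0) L0) hCC.
  move: h1 h3 h4 L0; set L := ln _; set q := p n ^+ 2; set N := n%:R => h1 h3 h4 L0.
  nra.
have hb := gnp_bad hp0 hp1 hxi0 hxi1 n1 hd.
have hc := @gnp_compl R n (p n) (@good_event R n (p n) xi).
have hb0 := @gnp_ge0 R n (p n) (fun G : {set {set 'I_n}} => ~~ good_event (p n) xi G) hp0 hp1.
have hh : (n%:R : R)^-1 <= 2 * harmonic n.
  rewrite /harmonic /=.
  have N0 : (0 : R) < n%:R by rewrite ltr0n.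
  have a1 : (n%:R : R)^-1 * n%:R = 1 by rewrite mulVf // gt_eqF.
  have b1 : (n.+1%:R : R)^-1 * n.+1%:R = 1 by rewrite mulVf // pnatr_eq0.
  have a0 : (0 : R) < (n%:R)^-1 by rewrite invr_gt0.
  have b0 : (0 : R) < (n.+1%:R)^-1 by rewrite invr_gt0 ltr0n.
  have hn1 : (1 : R) <= n%:R by rewrite ler1n.
  rewrite -natr1 in b1 b0 *.
  move: a1 b1 a0 b0 hn1; set a := _^-1; set b := _^-1; set N := n%:R => a1 b1 a0 b0 hn1.
  nra.
apply/andP; split; lra.
Unshelve. all: end_near.
Qed.
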